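(* Let $S$ be an inverse semigroup with zero. Then there is an order isomorphism (with respect to inclusion) between the set of proper filters of $S$ and the set of prime filters of $\mathsf{D}(S)$.
   Context: The natural partial order is used; $X^{\uparrow}=\{s: x\le s \text{ for some } x\in X\}$, $X^{\downarrow}=\{s : s\le x \text{ for some } x\in X\}$. A filter in an inverse semigroup is a nonempty subset $F$ with $F=F^{\uparrow}$ such that for all $a,b\in F$ there is $c\in F$ with $c\le a,b$; it is proper if it does not contain zero. Elements $s,t$ are compatible if $s^{-1}t,st^{-1}$ are idempotents. $\mathsf{D}(S)$ is the set of subsets $\{a_1,\dots,a_m\}^{\downarrow}$ with $\{a_1,\dots,a_m\}$ a finite compatible subset of $S$, under subset multiplication, ordered by inclusion; it is a distributive inverse semigroup (joins of compatible elements are unions, and its zero is $\{0\}$). A prime filter of a distributive inverse semigroup is a proper filter $P$ such that whenever $a,b$ are compatible and $a\vee b\in P$, then $a\in P$ or $b\in P$. *)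

(* Defs.v *)
(* Subsets are predicates S -> Prop, compared with Leibniz equality. *)
From Stdlib Require Import List.
Import ListNotations.
Set Implicit Arguments.

Section InvSemigroup.
Variables (S : Type) (mul : S -> S -> S) (inv : S -> S) (z : S).

Definition inverse_semigroup_with_zero : Prop :=
  (forall x y w, mul x (mul y w) = mul (mul x y) w) /\
  (forall x, mul (mul x (inv x)) x = x) /\
  (forall x, mul (mul (inv x) x) (inv x) = inv x) /\
  (forall x y, mul (mul x y) x = x -> mul (mul y x) y = y -> y = inv x) /\
  (forall x, mul z x = z /\ mul x z = z).

Definition idem (e : S) : Prop := mul e e = e.

Definition nle (s t : S) : Prop := s = mul t (mul (inv s) s).

Definition upset (X : S -> Prop) : S -> Prop := fun s => exists x, X x /\ nle x s.
Definition downset (X : S -> Prop) : S -> Prop := fun s => exists x, X x /\ nle s x.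

Definition subset (A B : S -> Prop) : Prop := forall x, A x -> B x.

Definition filter (F : S -> Prop) : Prop :=
  (exists a, F a) /\ F = upset F /\
  (forall a b, F a -> F b -> exists c, F c /\ nle c a /\ nle c b).

Definition proper_filter (F : S -> Prop) : Prop := filter F /\ ~ F z.

Definition compatible (s t : S) : Prop := idem (mul (inv s) t) /\ idem (mul s (inv t)).

Definition inD (A : S -> Prop) : Prop :=
  exists l : list S, l <> [] /\
    (forall a b, In a l -> In b l -> compatible a b) /\
    A = downset (fun x => In x l).

Definition setmul (A B : S -> Prop) : S -> Prop :=
  fun x => exists a b, A a /\ B b /\ x = mul a b.
Definition setinv (A : S -> Prop) : S -> Prop := fun x => exists a, A a /\ x = inv a.
Definition setunion (A B : S -> Prop) : S -> Prop := fun x => A x \/ B x.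
Definition zeroD : S -> Prop := fun x => x = z.

Definition idemD (X : S -> Prop) : Prop := setmul X X = X.
Definition compatibleD (A B : S -> Prop) : Prop :=
  idemD (setmul (setinv A) B) /\ idemD (setmul A (setinv B)).

(* order on D(S) is inclusion; filters of D(S) are sets of elements of D(S) *)
Definition upsetD (P : (S -> Prop) -> Prop) : (S -> Prop) -> Prop :=
  fun A => inD A /\ exists B, P B /\ subset B A.

Definition filterD (P : (S -> Prop) -> Prop) : Prop :=
  (exists A, P A) /\ P = upsetD P /\
  (forall A B, P A -> P B -> exists C, P C /\ subset C A /\ subset C B).

Definition prime_filterD (P : (S -> Prop) -> Prop) : Prop :=
  filterD P /\ ~ P zeroD /\
  (forall A B, inD A -> inD B -> compatibleD A B ->
     P (setunion A B) -> P A \/ P B).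

End InvSemigroup.

(* Main.v *)
Require Import Defs.
From Stdlib Require Import List FunctionalExtensionality PropExtensionality.
Import ListNotations.

Section ISG.
Variables (S : Type) (mul : S -> S -> S) (inv : S -> S) (z : S).
Hypothesis HS : inverse_semigroup_with_zero mul inv z.
Local Infix "**" := mul (at level 40, left associativity).

Lemma assoc : forall x y w, x ** (y ** w) = x ** y ** w.
Proof. apply HS. Qed.
Lemma ax1 : forall x, x ** inv x ** x = x.
Proof. apply HS. Qed.
Lemma ax2 : forall x, inv x ** x ** inv x = inv x.
Proof. apply HS. Qed.
Lemma uniq : forall x y, x ** y ** x = x -> y ** x ** y = y -> y = inv x.
Proof. apply HS. Qed.
Lemma ax1' : forall a x, a ** x ** inv x ** x = a ** x.
Proof. intros. rewrite <- !assoc. rewrite (assoc x), ax1. reflexivity. Qed.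
Lemma ax2' : forall a x, a ** inv x ** x ** inv x = a ** inv x.
Proof. intros. rewrite <- !assoc. rewrite (assoc (inv x)), ax2. reflexivity. Qed.
Lemma idr : forall e, e ** e = e -> forall a, a ** e ** e = a ** e.
Proof. intros. rewrite <- assoc, H. reflexivity. Qed.

Lemma inv_inv : forall x, inv (inv x) = x.
Proof. intros x. symmetry. apply uniq. apply ax2. apply ax1. Qed.

Lemma idem_inv : forall e, idem mul e -> inv e = e.
Proof. intros e H. unfold idem in H. symmetry. apply uniq; rewrite !H; auto. Qed.

Lemma idem_comm : forall e f, idem mul e -> idem mul f -> e ** f = f ** e.
Proof.
  unfold idem. intros e f He Hf.
  assert (Hef : forall e f, e ** e = e -> f ** f = f -> (e ** f) ** (e ** f) = e ** f).
  { clear e f He Hf. intros e f He Hf.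
    pose proof (idr _ He) as He'. pose proof (idr _ Hf) as Hf'.
    set (x := inv (e ** f)).
    set (y := f ** x ** e).
    assert (Hy : y ** y = y).
    { unfold y. rewrite !assoc. idtac. 
      transitivity (f ** (x ** (e ** f) ** x) ** e).
      - rewrite !assoc. reflexivity.
      - unfold x. rewrite ax2. reflexivity. }
    assert (Hyx : y = x).
    { apply uniq.
      - unfold y. rewrite !assoc. rewrite Hf', He'.
        transitivity (e ** f ** x ** (e ** f)).
        + rewrite !assoc. reflexivity.
        + apply ax1.
      - unfold y. rewrite !assoc. rewrite He', Hf'.
        transitivity (y ** y); [unfold y; rewrite !assoc; reflexivity | exact Hy]. }
    assert (Hxi : idem mul x) by (unfold idem; rewrite <- Hyx; exact Hy).
    assert (Hxx : inv x = x) by (apply idem_inv; exact Hxi).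
    unfold x in Hxx. rewrite inv_inv in Hxx. rewrite Hxx. exact Hxi. }
  assert (H1 := Hef e f He Hf). assert (H2 := Hef f e Hf He).
  pose proof (idr _ He) as He'. pose proof (idr _ Hf) as Hf'.
  assert (f ** e = inv (e ** f)).
  { apply uniq.
    - rewrite !assoc. rewrite Hf'. rewrite He'. transitivity ((e**f)**(e**f)); [rewrite !assoc; reflexivity | exact H1].
    - rewrite !assoc. rewrite He'. rewrite Hf'. transitivity ((f**e)**(f**e)); [rewrite !assoc; reflexivity | exact H2]. }
  rewrite H. symmetry. apply idem_inv. exact H1.
Qed.

Lemma idem_mul : forall e f, idem mul e -> idem mul f -> idem mul (e ** f).
Proof.
  intros e f He Hf. pose proof He as He0. pose proof Hf as Hf0. unfold idem in *.
  replace (e ** f ** (e ** f)) with (e ** (f ** e) ** f) by (rewrite !assoc; reflexivity).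
  rewrite (idem_comm f e Hf0 He0). rewrite !assoc. rewrite He. rewrite (idr _ Hf). reflexivity.
Qed.

Lemma idem_l : forall x, idem mul (inv x ** x).
Proof. intros x. unfold idem. rewrite assoc. rewrite ax2. reflexivity. Qed.
Lemma idem_r : forall x, idem mul (x ** inv x).
Proof. intros x. unfold idem. rewrite assoc. rewrite ax1. reflexivity. Qed.

Lemma inv_mul : forall s t, inv (s ** t) = inv t ** inv s.
Proof.
  intros s t. symmetry. apply uniq.
  - replace (s ** t ** (inv t ** inv s) ** (s ** t)) with (s ** ((t ** inv t) ** (inv s ** s)) ** t)
      by (rewrite !assoc; reflexivity).
    rewrite (idem_comm _ _ (idem_r t) (idem_l s)). rewrite !assoc. rewrite ax1. rewrite ax1'. reflexivity.
  - replace (inv t ** inv s ** (s ** t) ** (inv t ** inv s)) with (inv t ** ((inv s ** s) ** (t ** inv t)) ** inv s)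
      by (rewrite !assoc; reflexivity).
    rewrite (idem_comm _ _ (idem_l s) (idem_r t)). rewrite !assoc. rewrite ax2. rewrite ax2'. reflexivity.
Qed.

Lemma nle_right : forall t e, idem mul e -> nle mul inv (t ** e) t.
Proof.
  intros t e He. unfold nle. rewrite inv_mul, (idem_inv e He).
  replace (t ** (e ** inv t ** (t ** e))) with (t ** (e ** (inv t ** t)) ** e) by (rewrite !assoc; reflexivity).
  rewrite (idem_comm _ _ He (idem_l t)). rewrite !assoc. rewrite ax1. rewrite (idr _ He). reflexivity.
Qed.

Lemma nle_left : forall t e, idem mul e -> nle mul inv (e ** t) t.
Proof.
  intros t e He.
  assert (Hf : idem mul (inv t ** e ** t)).
  { unfold idem.
    replace (inv t ** e ** t ** (inv t ** e ** t)) with (inv t ** (e ** (t ** inv t)) ** e ** t)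
      by (rewrite !assoc; reflexivity).
    rewrite (idem_comm _ _ He (idem_r t)). rewrite !assoc. rewrite ax2. rewrite (idr _ He). reflexivity. }
  replace (e ** t) with (t ** (inv t ** e ** t)).
  - apply nle_right. exact Hf.
  - replace (t ** (inv t ** e ** t)) with ((t ** inv t) ** e ** t) by (rewrite !assoc; reflexivity).
    rewrite (idem_comm _ _ (idem_r t) He). rewrite !assoc. rewrite ax1'. reflexivity.
Qed.

Lemma nle_refl : forall s, nle mul inv s s.
Proof. intros s. unfold nle. rewrite assoc, ax1. reflexivity. Qed.

Lemma nle_trans : forall s t u, nle mul inv s t -> nle mul inv t u -> nle mul inv s u.
Proof.
  intros s t u H1 H2. unfold nle in H1, H2.
  rewrite H1. rewrite H2 at 1. rewrite <- assoc. apply nle_right.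
  apply idem_mul; apply idem_l.
Qed.

Lemma nle_lform : forall s t, nle mul inv s t -> s = s ** inv s ** t.
Proof.
  intros s t H. unfold nle in H.
  assert (Hi : inv s = inv s ** s ** inv t).
  { rewrite H at 1. rewrite inv_mul, (idem_inv _ (idem_l s)). reflexivity. }
  rewrite Hi. rewrite !assoc. rewrite ax1.
  rewrite H at 2.
  replace (t ** (inv s ** s) ** inv t ** t) with (t ** ((inv s ** s) ** (inv t ** t))) by (rewrite !assoc; reflexivity).
  rewrite (idem_comm _ _ (idem_l s) (idem_l t)). rewrite !assoc. rewrite ax1. rewrite <- assoc. exact H.
Qed.

Lemma nle_mul : forall s t u v, nle mul inv s t -> nle mul inv u v -> nle mul inv (s ** u) (t ** v).
Proof.
  intros s t u v H1 H2. apply nle_lform in H1. unfold nle in H2.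
  rewrite H1, H2.
  replace (s ** inv s ** t ** (v ** (inv u ** u))) with ((s ** inv s) ** ((t ** v) ** (inv u ** u)))
    by (rewrite !assoc; reflexivity).
  apply nle_trans with ((t ** v) ** (inv u ** u)).
  - apply nle_left. apply idem_r.
  - apply nle_right. apply idem_l.
Qed.

Lemma nle_inv : forall s t, nle mul inv s t -> nle mul inv (inv s) (inv t).
Proof.
  intros s t H. apply nle_lform in H. rewrite H. rewrite inv_mul, (idem_inv _ (idem_r s)).
  apply nle_right. apply idem_r.
Qed.

Lemma nle_idem : forall s e, nle mul inv s e -> idem mul e -> idem mul s.
Proof. intros s e H He. unfold nle in H. rewrite H. apply idem_mul. exact He. apply idem_l. Qed.

Lemma nle_z : forall s, nle mul inv s z -> s = z.
Proof. intros s H. unfold nle in H. rewrite H. apply HS. Qed.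

Lemma compat_refl : forall a, compatible mul inv a a.
Proof. intros a. split. apply idem_l. apply idem_r. Qed.


Definition d1 (s : S) : S -> Prop := downset mul inv (fun x => In x [s]).

Lemma down_closed : forall X a b, downset mul inv X a -> nle mul inv b a -> downset mul inv X b.
Proof. intros X a b [x [Hx Hax]] Hba. exists x. split. exact Hx. eapply nle_trans; eauto. Qed.

Lemma d1_self : forall s, d1 s s.
Proof. intros s. exists s. split. left; reflexivity. apply nle_refl. Qed.

Lemma d1_inD : forall s, inD mul inv (d1 s).
Proof.
  intros s. exists [s]. split. discriminate. split.
  - intros a b [<-|[]] [<-|[]]. apply compat_refl.
  - reflexivity.
Qed.

Lemma d1_sub_down : forall X s, downset mul inv X s -> subset (d1 s) (downset mul inv X).
Proof. intros X s Hs x [y [[<-|[]] Hxy]]. eapply down_closed; eauto. Qed.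

Lemma d1_le : forall s t, nle mul inv s t -> subset (d1 s) (d1 t).
Proof. intros s t H. apply d1_sub_down. exists t. split. left; reflexivity. exact H. Qed.

Lemma d1_z : d1 z = zeroD z.
Proof.
  apply functional_extensionality. intros x. apply propositional_extensionality. unfold zeroD. split.
  - intros [y [[<-|[]] H]]. apply nle_z. exact H.
  - intros ->. apply d1_self.
Qed.

Lemma pred_ext : forall (A B : S -> Prop), (forall x, A x -> B x) -> (forall x, B x -> A x) -> A = B.
Proof.
  intros A B H1 H2. apply functional_extensionality. intros x. apply propositional_extensionality. split; auto.
Qed.

Lemma compatD : forall l1 l2, (forall a b, In a l1 -> In b l2 -> compatible mul inv a b) ->
  compatibleD mul inv (downset mul inv (fun x => In x l1)) (downset mul inv (fun x => In x l2)).
Proof.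
  intros l1 l2 Hc. split.
  - assert (Hid : forall x, setmul mul (setinv inv (downset mul inv (fun x => In x l1)))
                    (downset mul inv (fun x => In x l2)) x -> idem mul x).
    { intros x [p [q [[a [[ai [Hai Hle1]] ->]] [[bj [Hbj Hle2]] ->]]]].
      eapply nle_idem. apply nle_mul. apply nle_inv. exact Hle1. exact Hle2.
      apply (Hc _ _ Hai Hbj). }
    unfold idemD. apply pred_ext.
    + intros x [p [q [Hp [Hq ->]]]].
      pose proof (Hid q Hq) as Hqi.
      destruct Hp as [p' [q' [Hp' [Hq' ->]]]].
      exists p', (q' ** q). split. exact Hp'. split.
      * eapply down_closed. exact Hq'. apply nle_right. exact Hqi.
      * rewrite assoc. reflexivity.
    + intros x Hx. exists x, x. split. exact Hx. split. exact Hx. symmetry. apply (Hid x Hx).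
  - assert (Hid : forall x, setmul mul (downset mul inv (fun x => In x l1))
                    (setinv inv (downset mul inv (fun x => In x l2))) x -> idem mul x).
    { intros x [p [q [[ai [Hai Hle1]] [[b [[bj [Hbj Hle2]] ->]] ->]]]].
      eapply nle_idem. apply nle_mul. exact Hle1. apply nle_inv. exact Hle2.
      apply (Hc _ _ Hai Hbj). }
    unfold idemD. apply pred_ext.
    + intros x [p [q [Hp [Hq ->]]]].
      pose proof (Hid q Hq) as Hqi.
      destruct Hp as [p' [q' [Hp' [[b [Hb ->]] ->]]]].
      exists p', (inv (q ** b)). split. exact Hp'. split.
      * exists (q ** b). split. eapply down_closed. exact Hb. apply nle_left. exact Hqi. reflexivity.
      * rewrite inv_mul, (idem_inv q Hqi). rewrite assoc. reflexivity.
    + intros x Hx. exists x, x. split. exact Hx. split. exact Hx. symmetry. apply (Hid x Hx).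
Qed.

Lemma PinD : forall P A, filterD mul inv P -> P A -> inD mul inv A.
Proof. intros P A [_ [E _]] HA. rewrite E in HA. destruct HA as [H _]. exact H. Qed.

Lemma Pup : forall P A B, filterD mul inv P -> inD mul inv A -> P B -> subset B A -> P A.
Proof. intros P A B [_ [E _]] HA HB Hs. rewrite E. split. exact HA. exists B. split; assumption. Qed.

Lemma Fup : forall F x y, Defs.filter mul inv F -> F x -> nle mul inv x y -> F y.
Proof. intros F x y [_ [E _]] Hx Hxy. rewrite E. exists x. split; assumption. Qed.

Lemma decomp : forall P, prime_filterD mul inv z P -> forall l, l <> [] ->
  (forall a b, In a l -> In b l -> compatible mul inv a b) ->
  P (downset mul inv (fun x => In x l)) -> exists a, In a l /\ P (d1 a).
Proof.
  intros P [HF [_ Hpr]] l. induction l as [|a l IH]; intros Hne Hc HP.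
  - congruence.
  - destruct l as [|b l].
    + exists a. split. left; reflexivity. exact HP.
    + assert (E : downset mul inv (fun x => In x (a :: b :: l)) =
                  setunion (d1 a) (downset mul inv (fun x => In x (b :: l)))).
      { apply pred_ext.
        - intros x [y [[<-|Hy] Hxy]].
          + left. exists a. split. left; reflexivity. exact Hxy.
          + right. exists y. split; assumption.
        - intros x [[y [[<-|[]] Hxy]]|[y [Hy Hxy]]].
          + exists a. split. left; reflexivity. exact Hxy.
          + exists y. split. right; exact Hy. exact Hxy. }
      rewrite E in HP.
      assert (HB : inD mul inv (downset mul inv (fun x => In x (b :: l)))).
      { exists (b :: l). split. discriminate. split.
        - intros x y Hx Hy. apply Hc; right; assumption.
        - reflexivity. }
      assert (HCo : compatibleD mul inv (d1 a) (downset mul inv (fun x => In x (b :: l)))).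
      { apply compatD. intros x y [<-|[]] Hy. apply Hc. left; reflexivity. right; exact Hy. }
      destruct (Hpr _ _ (d1_inD a) HB HCo HP) as [H|H].
      * exists a. split. left; reflexivity. exact H.
      * destruct (IH ltac:(discriminate)) as [c [Hc1 Hc2]].
        -- intros x y Hx Hy. apply Hc; right; assumption.
        -- exact H.
        -- exists c. split. right; exact Hc1. exact Hc2.
Qed.


Lemma inD_sub : forall A x, inD mul inv A -> A x -> subset (d1 x) A.
Proof. intros A x [l [_ [_ ->]]] Hx. apply d1_sub_down. exact Hx. Qed.

Lemma d1_le_inv : forall a c, d1 a c -> nle mul inv c a.
Proof. intros a c [y [[<-|[]] H]]. exact H. Qed.

Theorem main :
  exists (f : (S -> Prop) -> ((S -> Prop) -> Prop))
         (g : ((S -> Prop) -> Prop) -> (S -> Prop)),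
    (forall F, proper_filter mul inv z F -> prime_filterD mul inv z (f F)) /\
    (forall P, prime_filterD mul inv z P -> proper_filter mul inv z (g P)) /\
    (forall F, proper_filter mul inv z F -> g (f F) = F) /\
    (forall P, prime_filterD mul inv z P -> f (g P) = P) /\
    (forall F G, proper_filter mul inv z F -> proper_filter mul inv z G ->
       (subset F G <-> (forall A, f F A -> f G A))).
Proof.
  exists (fun F A => inD mul inv A /\ exists x, A x /\ F x), (fun P s => P (d1 s)).
  split; [|split; [|split; [|split]]].
  - intros F [HF Hz]. pose proof HF as HF0. destruct HF as [[a Ha] [E Hm]].
    split; [split; [|split]|split].
    + exists (d1 a). split. apply d1_inD. exists a. split. apply d1_self. exact Ha.
    + apply functional_extensionality. intros A. apply propositional_extensionality. split.
      * intros H. split. apply H. exists A. split. exact H. intros x Hx; exact Hx.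
      * intros [HA [B [[_ [x [Bx Fx]]] Hs]]]. split. exact HA. exists x. split. apply Hs, Bx. exact Fx.
    + intros A B [HA [x [Ax Fx]]] [HB [y [By Fy]]].
      destruct (Hm x y Fx Fy) as [c [Fc [Hcx Hcy]]].
      exists (d1 c). split; [|split].
      * split. apply d1_inD. exists c. split. apply d1_self. exact Fc.
      * intros w Hw. apply (inD_sub A x HA Ax). apply (d1_le c x Hcx). exact Hw.
      * intros w Hw. apply (inD_sub B y HB By). apply (d1_le c y Hcy). exact Hw.
    + intros [_ [x [Hx Fx]]]. unfold zeroD in Hx. subst x. contradiction.
    + intros A B HA HB _ [_ [x [[Ax|Bx] Fx]]].
      * left. split. exact HA. exists x. split; assumption.
      * right. split. exact HB. exists x. split; assumption.
  - intros P HP. pose proof HP as HP0. destruct HP as [HF [Hz Hpr]].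
    pose proof HF as HF0. destruct HF as [[A HA] [E Hm]].
    split; [split; [|split]|].
    + destruct (PinD P A HF0 HA) as [l [Hne [Hc EA]]]. rewrite EA in HA.
      destruct (decomp P HP0 l Hne Hc HA) as [a [_ Ha]]. exists a. exact Ha.
    + apply pred_ext.
      * intros s Hs. exists s. split. exact Hs. apply nle_refl.
      * intros s [x [Px Hxs]]. apply (Pup P (d1 s) (d1 x) HF0 (d1_inD s) Px (d1_le x s Hxs)).
    + intros a b Ha Hb. destruct (Hm _ _ Ha Hb) as [C [HC [HCa HCb]]].
      destruct (PinD P C HF0 HC) as [l [Hne [Hc EC]]]. rewrite EC in HC.
      destruct (decomp P HP0 l Hne Hc HC) as [c [Hcl Hc']].
      assert (Cc : C c) by (rewrite EC; exists c; split; [exact Hcl | apply nle_refl]).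
      exists c. split. exact Hc'. split.
      * apply d1_le_inv. apply HCa. exact Cc.
      * apply d1_le_inv. apply HCb. exact Cc.
    + intros H. rewrite d1_z in H. contradiction.
  - intros F [HF _]. apply pred_ext.
    + intros s [_ [x [Hx Fx]]]. apply (Fup F x s HF Fx). apply d1_le_inv. exact Hx.
    + intros s Fs. split. apply d1_inD. exists s. split. apply d1_self. exact Fs.
  - intros P HP. pose proof HP as HP0. destruct HP as [HF _].
    apply functional_extensionality. intros A. apply propositional_extensionality. split.
    + intros [HA [x [Ax Px]]]. apply (Pup P A (d1 x) HF HA Px). apply inD_sub; assumption.
    + intros HA. pose proof (PinD P A HF HA) as HAD. split. exact HAD.
      destruct HAD as [l [Hne [Hc EA]]]. rewrite EA in HA.
      destruct (decomp P HP0 l Hne Hc HA) as [a [Hal Ha]].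
      exists a. split. rewrite EA. exists a. split. exact Hal. apply nle_refl. exact Ha.
  - intros F G [HFf _] [HGf _]. split.
    + intros H A [HA [x [Ax Fx]]]. split. exact HA. exists x. split. exact Ax. apply H, Fx.
    + intros H s Fs.
      destruct (H (d1 s)) as [_ [x [Hx Gx]]].
      * split. apply d1_inD. exists s. split. apply d1_self. exact Fs.
      * apply (Fup G x s HGf Gx). apply d1_le_inv. exact Hx.
Qed.

End ISG.

Theorem lemma2p14 (S : Type) (mul : S -> S -> S) (inv : S -> S) (z : S)
  (HS : inverse_semigroup_with_zero mul inv z) :
  exists (f : (S -> Prop) -> ((S -> Prop) -> Prop))
         (g : ((S -> Prop) -> Prop) -> (S -> Prop)),
    (forall F, proper_filter mul inv z F -> prime_filterD mul inv z (f F)) /\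
    (forall P, prime_filterD mul inv z P -> proper_filter mul inv z (g P)) /\
    (forall F, proper_filter mul inv z F -> g (f F) = F) /\
    (forall P, prime_filterD mul inv z P -> f (g P) = P) /\
    (forall F G, proper_filter mul inv z F -> proper_filter mul inv z G ->
       (subset F G <-> (forall A, f F A -> f G A))).
Proof.
  exact (main S mul inv z HS).
Qed.
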